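(* The equations \[ \alpha u=k\frac{f_0g_0f_3}{f_0g_0+g_0f_3+f_3g_3}+\ell\frac{f_2g_2f_5}{f_2g_2+g_2f_5+f_5g_5}+m\frac{f_4g_4f_1}{f_4g_4+g_4f_1+f_1g_1}, \] \[ \beta v=k\frac{g_0f_3g_3}{f_0g_0+g_0f_3+f_3g_3}+\ell\frac{g_2f_5g_5}{f_2g_2+g_2f_5+f_5g_5}+m\frac{g_4f_1g_1}{f_4g_4+g_4f_1+f_1g_1} \] are well defined equations for the point $\mathfrak{z}\in V(\mathcal{T}\mathcal{L})$, i.e. they are invariant under the shift $(k,\ell,m)\mapsto(k+n,\ell+n,m+n)$, provided the equations $\frac{u(\mathfrak{z}_2)-u(\mathfrak{z}_1)}{u(\mathfrak{z}_3)-u(\mathfrak{z}_2)}=\frac{v(\mathfrak{z}_3)-v(\mathfrak{z}_2)}{v(\mathfrak{z}_1)-v(\mathfrak{z}_3)}$ hold on all positively oriented elementary triangles.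
   Context: On the regular triangular lattice with vertices $\mathfrak{z}=k+\ell\omega+m\omega^2$ ($\omega=e^{2\pi i/3}$; the triples $(k,\ell,m)$ and $(k+n,\ell+n,m+n)$ represent the same vertex), $u,v$ are complex functions on vertices. For a vertex $\mathfrak{z}$ with chosen representative $(k,\ell,m)$, $u=u(\mathfrak{z})$, $v=v(\mathfrak{z})$, and with edges $\mathfrak{e}_0=(\mathfrak{z},\mathfrak{z}+1)$, $\mathfrak{e}_2=(\mathfrak{z},\mathfrak{z}+\omega)$, $\mathfrak{e}_4=(\mathfrak{z},\mathfrak{z}+\omega^2)$, $\mathfrak{e}_1=(\mathfrak{z}-\omega^2,\mathfrak{z})$, $\mathfrak{e}_3=(\mathfrak{z}-1,\mathfrak{z})$, $\mathfrak{e}_5=(\mathfrak{z}-\omega,\mathfrak{z})$, set $f_j=u(\text{end of }\mathfrak{e}_j)-u(\text{start of }\mathfrak{e}_j)$, $g_j$ likewise with $v$. A positively oriented elementary triangle has consecutive vertices $\mathfrak{z}_1,\mathfrak{z}_2,\mathfrak{z}_3$ with $\mathfrak{z}_2-\mathfrak{z}_1,\mathfrak{z}_3-\mathfrak{z}_2,\mathfrak{z}_1-\mathfrak{z}_3\in\{1,\omega,\omega^2\}$. $\alpha,\beta\in\mathbb C$ are constants. *)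

(* Defs.v *)
From mathcomp Require Import all_boot all_algebra.
From mathcomp Require Import reals complex.
Set Implicit Arguments. Unset Strict Implicit. Unset Printing Implicit Defensive.
Import GRing.Theory Num.Theory.
Local Open Scope ring_scope.

(* Vertices of the triangular lattice: the pair (a, b) : int * int stands for
   the point a + b*omega.  Then 1 = (1,0), omega = (0,1), omega^2 = -1-omega = (-1,-1). *)
Definition vtx := (int * int)%type.
Definition vadd (z w : vtx) : vtx := (z.1 + w.1, z.2 + w.2).
Definition vsub (z w : vtx) : vtx := (z.1 - w.1, z.2 - w.2).
Definition v_one : vtx := (1, 0).
Definition v_om : vtx := (0, 1).
Definition v_om2 : vtx := (-1, -1).

(* The vertex k + l*omega + m*omega^2 = (k - m) + (l - m)*omega. *)
Definition vtx_of (k l m : int) : vtx := (k - m, l - m).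

Definition is_step (d : vtx) : Prop := d = v_one \/ d = v_om \/ d = v_om2.

Definition pos_triangle (z1 z2 z3 : vtx) : Prop :=
  is_step (vsub z2 z1) /\ is_step (vsub z3 z2) /\ is_step (vsub z1 z3).

Section Lattice.
Variable R : realType.
Implicit Types (u v : vtx -> R[i]).

(* The triangle equation (u(z2)-u(z1))/(u(z3)-u(z2)) = (v(z3)-v(z2))/(v(z1)-v(z3)),
   together with the nonvanishing of its denominators (so that it is meaningful). *)
Definition triangle_eq u v (z1 z2 z3 : vtx) : Prop :=
  [/\ u z3 - u z2 != 0, v z1 - v z3 != 0 &
      (u z2 - u z1) / (u z3 - u z2) = (v z3 - v z2) / (v z1 - v z3)].

(* f_j for the edges e_j at the vertex z (w = u or v) *)
Definition edge_diff (w : vtx -> R[i]) (z : vtx) (j : nat) : R[i] :=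
  match j with
  | 0 => w (vadd z v_one) - w z
  | 1 => w z - w (vsub z v_om2)
  | 2 => w (vadd z v_om) - w z
  | 3 => w z - w (vsub z v_one)
  | 4 => w (vadd z v_om2) - w z
  | _ => w z - w (vsub z v_om)
  end.

Definition denom u v z (a b : nat) : R[i] :=
  let f := edge_diff u z in let g := edge_diff v z in
  f a * g a + g a * f b + f b * g b.

Definition fracU u v z (a b : nat) : R[i] :=
  let f := edge_diff u z in let g := edge_diff v z in
  f a * g a * f b / denom u v z a b.

Definition fracV u v z (a b : nat) : R[i] :=
  let f := edge_diff u z in let g := edge_diff v z in
  g a * f b * g b / denom u v z a b.

(* right-hand sides of the two equations at z, computed with representative (k,l,m) *)
Definition rhsU u v (k l m : int) : R[i] :=
  let z := vtx_of k l m in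
  k%:~R * fracU u v z 0 3 + l%:~R * fracU u v z 2 5 + m%:~R * fracU u v z 4 1.

Definition rhsV u v (k l m : int) : R[i] :=
  let z := vtx_of k l m in
  k%:~R * fracV u v z 0 3 + l%:~R * fracV u v z 2 5 + m%:~R * fracV u v z 4 1.

End Lattice.

(* Main.v *)
Require Import Defs.
From mathcomp Require Import all_boot all_algebra.
From mathcomp Require Import reals complex.
From mathcomp Require Import ring.
Import GRing.Theory Num.Theory.
Local Open Scope ring_scope.

Section K.
Variable F : fieldType.
Lemma lc3 (c1 c2 c3 : F) {l r e1 e2 e3 : F} : e1 = 0 -> e2 = 0 -> e3 = 0 ->
  l - r = c1*e1 + c2*e2 + c3*e3 -> l = r.
Proof. by move=> -> -> -> h; apply/eqP; rewrite -subr_eq0 h !mulr0 !addr0. Qed.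


Lemma keyPU (P0 P1 P2 P3 P4 P5 f1 f3 : F) :
  P1 + P2 != 0 -> (P0 - P2)*(P1 - P3) != 0 -> (P2 - P4)*(P3 - P5) != 0 ->
  (P4 - P0)*(P5 - P1) != 0 ->
  f3 * (P1 + P2) = f1 * (P2 + P3) ->
  (P0+P1)*(P2+P3)*(P4+P5) = (P1+P2)*(P3+P4)*(P5+P0) ->
  P0*(f1*(P2+P3))/((P0 - P2)*(P1 - P3)) + P2*(f3*(P4+P5))/((P2 - P4)*(P3 - P5))
  + P4*(f1*(P5+P0))/((P4 - P0)*(P5 - P1)) = 0.
Proof.
move=> a1 q0 q2 q4 hf C.
move: q0 q2 q4; rewrite !mulf_eq0 !negb_or => /andP[q0a q0b] /andP[q2a q2b] /andP[q4a q4b].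
have -> : f3 = f1 * (P2+P3) / (P1+P2) by rewrite -hf; field; rewrite a1.
transitivity (f1 * ((0 - P2*P3*P4*P5 - P2*P2*P3*P4 + P1*P2*P4*P5 + P1*P2*P2*P4 - P0*P2*P4*P5 + P0*P2*P3*P5 + P0*P2*P3*P4 + P0*P2*P2*P5 - P0*P1*P4*P5 + P0*P1*P3*P4 - P0*P1*P2*P3 - P0*P1*P2*P2) * ((P0+P1)*(P2+P3)*(P4+P5) - (P1+P2)*(P3+P4)*(P5+P0))) / ((P1+P2)*((P0 - P2)*(P1 - P3))*((P2 - P4)*(P3 - P5))*((P4 - P0)*(P5 - P1)))).
  field.
 by rewrite ?a1 ?q0a ?q0b ?q2a ?q2b ?q4a ?q4b.
by rewrite C subrr !(mulr0, mul0r).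
Qed.

Lemma keyPV (P0 P1 P2 P3 P4 P5 g0 g2 : F) :
  P1 + P2 != 0 -> (P0 - P2)*(P1 - P3) != 0 -> (P2 - P4)*(P3 - P5) != 0 ->
  (P4 - P0)*(P5 - P1) != 0 ->
  g0 * (P1 + P2) = g2 * (P0 + P1) ->
  (P0+P1)*(P2+P3)*(P4+P5) = (P1+P2)*(P3+P4)*(P5+P0) ->
  P3*(g2*(P0+P1))/((P0 - P2)*(P1 - P3)) + P5*(g2*(P3+P4))/((P2 - P4)*(P3 - P5))
  + P1*(g0*(P4+P5))/((P4 - P0)*(P5 - P1)) = 0.
Proof.
move=> a1 q0 q2 q4 hg C.
move: q0 q2 q4; rewrite !mulf_eq0 !negb_or => /andP[q0a q0b] /andP[q2a q2b] /andP[q4a q4b].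
have -> : g0 = g2 * (P0+P1) / (P1+P2) by rewrite -hg; field; rewrite a1.
transitivity (g2 * ((0 - P2*P3*P4*P5 - P1*P3*P4*P5 + P1*P2*P4*P5 + P1*P1*P3*P4 + P1*P1*P2*P5 - P1*P1*P2*P3 + P0*P2*P3*P5 - P0*P1*P4*P5 + P0*P1*P3*P5 + P0*P1*P3*P4 - P0*P1*P2*P3 - P0*P1*P1*P5) * ((P0+P1)*(P2+P3)*(P4+P5) - (P1+P2)*(P3+P4)*(P5+P0))) / ((P1+P2)*((P0 - P2)*(P1 - P3))*((P2 - P4)*(P3 - P5))*((P4 - P0)*(P5 - P1)))).
  field.
 by rewrite ?a1 ?q0a ?q0b ?q2a ?q2b ?q4a ?q4b.
by rewrite C subrr !(mulr0, mul0r).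
Qed.

Lemma keyFG (f0 f1 f2 f3 f4 f5 g0 g1 g2 g3 g4 g5 : F) :
 f0*g0 + f1*g1 + f1*g0 = 0 ->
 f1*g1 + f2*g2 + f1*g2 = 0 ->
 f2*g2 + f3*g3 + f3*g2 = 0 ->
 f3*g3 + f4*g4 + f3*g4 = 0 ->
 f4*g4 + f5*g5 + f5*g4 = 0 ->
 f5*g5 + f0*g0 + f5*g0 = 0 ->
 f1 != 0 -> f3 != 0 -> f5 != 0 -> g0 != 0 -> g2 != 0 -> g4 != 0 ->
 f0*g0 + g0*f3 + f3*g3 != 0 -> f2*g2 + g2*f5 + f5*g5 != 0 ->
 f4*g4 + g4*f1 + f1*g1 != 0 ->
 f0*g0*f3/(f0*g0 + g0*f3 + f3*g3) + f2*g2*f5/(f2*g2 + g2*f5 + f5*g5)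
   + f4*g4*f1/(f4*g4 + g4*f1 + f1*g1) = 0 /\
 g0*f3*g3/(f0*g0 + g0*f3 + f3*g3) + g2*f5*g5/(f2*g2 + g2*f5 + f5*g5)
   + g4*f1*g1/(f4*g4 + g4*f1 + f1*g1) = 0.
Proof.
move=> E0 E1 E2 E3 E4 E5 nf1 nf3 nf5 ng0 ng2 ng4 nD0 nD2 nD4.
have A0e : f0*g0 + f1*g1 = -(f1*g0) by apply: (lc3 (1) (0) (0) E0 E0 E0); ring.
have A1e : f1*g1 + f2*g2 = -(f1*g2) by apply: (lc3 (1) (0) (0) E1 E1 E1); ring.
have A2e : f2*g2 + f3*g3 = -(f3*g2) by apply: (lc3 (1) (0) (0) E2 E2 E2); ring.
have A3e : f3*g3 + f4*g4 = -(f3*g4) by apply: (lc3 (1) (0) (0) E3 E3 E3); ring.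
have A4e : f4*g4 + f5*g5 = -(f5*g4) by apply: (lc3 (1) (0) (0) E4 E4 E4); ring.
have A5e : f5*g5 + f0*g0 = -(f5*g0) by apply: (lc3 (1) (0) (0) E5 E5 E5); ring.
have nA1 : f1*g1 + f2*g2 != 0 by rewrite A1e oppr_eq0 mulf_neq0.
have nA3 : f3*g3 + f4*g4 != 0 by rewrite A3e oppr_eq0 mulf_neq0.
have nA5 : f5*g5 + f0*g0 != 0 by rewrite A5e oppr_eq0 mulf_neq0.
have hD0 : (f0*g0 + g0*f3 + f3*g3) * (f1*g1 + f2*g2) = (f0*g0 - f2*g2)*(f1*g1 - f3*g3).
  by apply: (lc3 (g0*f3) (-(f1*g0)) (f2*g2 + f3*g3) E1 E2 E0); ring.
have hD2 : (f2*g2 + g2*f5 + f5*g5) * (f3*g3 + f4*g4) = (f2*g2 - f4*g4)*(f3*g3 - f5*g5).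
  by apply: (lc3 (g2*f5) (-(f3*g2)) (f4*g4 + f5*g5) E3 E4 E2); ring.
have hD4 : (f4*g4 + g4*f1 + f1*g1) * (f5*g5 + f0*g0) = (f4*g4 - f0*g0)*(f5*g5 - f1*g1).
  by apply: (lc3 (g4*f1) (-(f5*g4)) (f0*g0 + f1*g1) E5 E0 E4); ring.
have hf3 : f3 * (f1*g1 + f2*g2) = f1 * (f2*g2 + f3*g3).
  by apply: (lc3 (f3) (-f1) (0) E1 E2 E2); ring.
have hf5 : f5 * (f3*g3 + f4*g4) = f3 * (f4*g4 + f5*g5).
  by apply: (lc3 (f5) (-f3) (0) E3 E4 E4); ring.
have hg0 : g0 * (f1*g1 + f2*g2) = g2 * (f0*g0 + f1*g1).
  by apply: (lc3 (g0) (-g2) (0) E1 E0 E0); ring.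
have hg4 : g4 * (f5*g5 + f0*g0) = g0 * (f4*g4 + f5*g5).
  by apply: (lc3 (g4) (-g0) (0) E5 E4 E4); ring.
have hC : (f0*g0 + f1*g1)*(f2*g2 + f3*g3)*(f4*g4 + f5*g5) =
          (f1*g1 + f2*g2)*(f3*g3 + f4*g4)*(f5*g5 + f0*g0).
  by rewrite A0e A1e A2e A3e A4e A5e; ring.
have nQ0 : (f0*g0 - f2*g2)*(f1*g1 - f3*g3) != 0 by rewrite -hD0 mulf_neq0.
have nQ2 : (f2*g2 - f4*g4)*(f3*g3 - f5*g5) != 0 by rewrite -hD2 mulf_neq0.
have nQ4 : (f4*g4 - f0*g0)*(f5*g5 - f1*g1) != 0 by rewrite -hD4 mulf_neq0.
split.
- have -> : f0*g0*f3/(f0*g0 + g0*f3 + f3*g3) =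
            f0*g0*(f1*(f2*g2 + f3*g3))/((f0*g0 - f2*g2)*(f1*g1 - f3*g3)).
    by rewrite -hf3 -hD0; field; rewrite nD0 nA1.
  have -> : f2*g2*f5/(f2*g2 + g2*f5 + f5*g5) =
            f2*g2*(f3*(f4*g4 + f5*g5))/((f2*g2 - f4*g4)*(f3*g3 - f5*g5)).
    by rewrite -hf5 -hD2; field; rewrite nD2 nA3.
  have -> : f4*g4*f1/(f4*g4 + g4*f1 + f1*g1) =
            f4*g4*(f1*(f5*g5 + f0*g0))/((f4*g4 - f0*g0)*(f5*g5 - f1*g1)).
    by rewrite -hD4; field; rewrite nD4 nA5.
  exact: keyPU.
- have -> : g0*f3*g3/(f0*g0 + g0*f3 + f3*g3) =
            f3*g3*(g2*(f0*g0 + f1*g1))/((f0*g0 - f2*g2)*(f1*g1 - f3*g3)).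
    by rewrite -hg0 -hD0; field; rewrite nD0 nA1.
  have -> : g2*f5*g5/(f2*g2 + g2*f5 + f5*g5) =
            f5*g5*(g2*(f3*g3 + f4*g4))/((f2*g2 - f4*g4)*(f3*g3 - f5*g5)).
    by rewrite -hD2; field; rewrite nD2 nA3.
  have -> : g4*f1*g1/(f4*g4 + g4*f1 + f1*g1) =
            f1*g1*(g0*(f4*g4 + f5*g5))/((f4*g4 - f0*g0)*(f5*g5 - f1*g1)).
    by rewrite -hg4 -hD4; field; rewrite nD4 nA5.
  exact: keyPV.
Qed.
End K.

Lemma lin1 {F : comPzRingType} (c : F) {x l r : F} : l = r -> x = c*(l - r) -> x = 0.
Proof. by move=> -> ->; rewrite subrr mulr0. Qed.

Lemma cross {F : fieldType} {a b c d : F} : a / b = c / d -> b != 0 -> d != 0 -> a * d = c * b.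
Proof. move=> h hb hd. transitivity (a / b * b * d); first by field. rewrite h. by field. Qed.

Lemma ed0 (R : realType) (w : vtx -> R[i]) z : edge_diff w z 0 = w (vadd z v_one) - w z. Proof. by []. Qed.
Lemma ed1 (R : realType) (w : vtx -> R[i]) z : edge_diff w z 1 = w z - w (vsub z v_om2). Proof. by []. Qed.
Lemma ed2 (R : realType) (w : vtx -> R[i]) z : edge_diff w z 2 = w (vadd z v_om) - w z. Proof. by []. Qed.
Lemma ed3 (R : realType) (w : vtx -> R[i]) z : edge_diff w z 3 = w z - w (vsub z v_one). Proof. by []. Qed.
Lemma ed4 (R : realType) (w : vtx -> R[i]) z : edge_diff w z 4 = w (vadd z v_om2) - w z. Proof. by []. Qed.
Lemma ed5 (R : realType) (w : vtx -> R[i]) z : edge_diff w z 5 = w z - w (vsub z v_om). Proof. by []. Qed.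

Ltac st := rewrite /is_step /vsub /vadd /v_one /v_om /v_om2 /=;
  first [left; congr (_,_); ring | right; left; congr (_,_); ring | right; right; congr (_,_); ring].
Ltac pt := rewrite /pos_triangle; split; [st | split; st].

Lemma pt0 z : pos_triangle (vadd z v_one) (vsub z v_om2) z. Proof. case: z => a b; pt. Qed.
Lemma pt1 z : pos_triangle (vadd z v_om) (vsub z v_om2) z. Proof. case: z => a b; pt. Qed.
Lemma pt2 z : pos_triangle (vadd z v_om) (vsub z v_one) z. Proof. case: z => a b; pt. Qed.
Lemma pt3 z : pos_triangle (vadd z v_om2) (vsub z v_one) z. Proof. case: z => a b; pt. Qed.
Lemma pt4 z : pos_triangle (vadd z v_om2) (vsub z v_om) z. Proof. case: z => a b; pt. Qed.
Lemma pt5 z : pos_triangle (vadd z v_one) (vsub z v_om) z. Proof. case: z => a b; pt. Qed.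

Theorem proposition15 (R : realType) (u v : vtx -> R[i]) (alpha beta : R[i]) :
  (forall z1 z2 z3 : vtx, pos_triangle z1 z2 z3 -> triangle_eq u v z1 z2 z3) ->
  forall k l m n : int,
    let z := vtx_of k l m in
    denom u v z 0 3 != 0 -> denom u v z 2 5 != 0 -> denom u v z 4 1 != 0 ->
    (vtx_of (k + n) (l + n) (m + n) = z) /\
    (alpha * u z = rhsU u v k l m <->
       alpha * u z = rhsU u v (k + n) (l + n) (m + n)) /\
    (beta * v z = rhsV u v k l m <->
       beta * v z = rhsV u v (k + n) (l + n) (m + n)) /\
    rhsU u v (k + n) (l + n) (m + n) = rhsU u v k l m /\
    rhsV u v (k + n) (l + n) (m + n) = rhsV u v k l m.
Proof.
move=> H k l m n z hD0 hD2 hD4.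
have hz : vtx_of (k + n) (l + n) (m + n) = z by rewrite /z /vtx_of; congr (_,_); ring.
have [SU SV] : fracU u v z 0 3 + fracU u v z 2 5 + fracU u v z 4 1 = 0 /\
               fracV u v z 0 3 + fracV u v z 2 5 + fracV u v z 4 1 = 0.
  have [n01 n02 R0] := H _ _ _ (pt0 z).
  have [n11 n12 R1] := H _ _ _ (pt1 z).
  have [n21 n22 R2] := H _ _ _ (pt2 z).
  have [n31 n32 R3] := H _ _ _ (pt3 z).
  have [n41 n42 R4] := H _ _ _ (pt4 z).
  have [n51 n52 R5] := H _ _ _ (pt5 z).
  move: (cross R0 n01 n02) (cross R1 n11 n12) (cross R2 n21 n22)
        (cross R3 n31 n32) (cross R4 n41 n42) (cross R5 n51 n52) => C0 C1 C2 C3 C4 C5.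
  have e0 : edge_diff u z 0 * edge_diff v z 0 + edge_diff u z 1 * edge_diff v z 1
            + edge_diff u z 1 * edge_diff v z 0 = 0.
    rewrite !ed0 !ed1; first [apply: (lin1 1 C0); ring | apply: (lin1 (-1) C0); ring].
  have e1 : edge_diff u z 1 * edge_diff v z 1 + edge_diff u z 2 * edge_diff v z 2
            + edge_diff u z 1 * edge_diff v z 2 = 0.
    rewrite !ed1 !ed2; first [apply: (lin1 1 C1); ring | apply: (lin1 (-1) C1); ring].
  have e2 : edge_diff u z 2 * edge_diff v z 2 + edge_diff u z 3 * edge_diff v z 3
            + edge_diff u z 3 * edge_diff v z 2 = 0.
    rewrite !ed2 !ed3; first [apply: (lin1 1 C2); ring | apply: (lin1 (-1) C2); ring].
  have e3 : edge_diff u z 3 * edge_diff v z 3 + edge_diff u z 4 * edge_diff v z 4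
            + edge_diff u z 3 * edge_diff v z 4 = 0.
    rewrite !ed3 !ed4; first [apply: (lin1 1 C3); ring | apply: (lin1 (-1) C3); ring].
  have e4 : edge_diff u z 4 * edge_diff v z 4 + edge_diff u z 5 * edge_diff v z 5
            + edge_diff u z 5 * edge_diff v z 4 = 0.
    rewrite !ed4 !ed5; first [apply: (lin1 1 C4); ring | apply: (lin1 (-1) C4); ring].
  have e5 : edge_diff u z 5 * edge_diff v z 5 + edge_diff u z 0 * edge_diff v z 0
            + edge_diff u z 5 * edge_diff v z 0 = 0.
    rewrite !ed5 !ed0; first [apply: (lin1 1 C5); ring | apply: (lin1 (-1) C5); ring].
  have nf1 : edge_diff u z 1 != 0 by rewrite ed1.
  have nf3 : edge_diff u z 3 != 0 by rewrite ed3.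
  have nf5 : edge_diff u z 5 != 0 by rewrite ed5.
  have ng0 : edge_diff v z 0 != 0 by rewrite ed0.
  have ng2 : edge_diff v z 2 != 0 by rewrite ed2.
  have ng4 : edge_diff v z 4 != 0 by rewrite ed4.
  exact: (@keyFG _ _ _ _ _ _ _ _ _ _ _ _ _ e0 e1 e2 e3 e4 e5 nf1 nf3 nf5 ng0 ng2 ng4 hD0 hD2 hD4).
have EU : rhsU u v (k + n) (l + n) (m + n) = rhsU u v k l m.
  change ((k + n)%:~R * fracU u v (vtx_of (k + n) (l + n) (m + n)) 0 3
        + (l + n)%:~R * fracU u v (vtx_of (k + n) (l + n) (m + n)) 2 5
        + (m + n)%:~R * fracU u v (vtx_of (k + n) (l + n) (m + n)) 4 1 = rhsU u v k l m).
  rewrite hz !intrD.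
  transitivity (k%:~R * fracU u v z 0 3 + l%:~R * fracU u v z 2 5 + m%:~R * fracU u v z 4 1
     + n%:~R * (fracU u v z 0 3 + fracU u v z 2 5 + fracU u v z 4 1)); first by ring.
  by rewrite SU mulr0 addr0.
have EV : rhsV u v (k + n) (l + n) (m + n) = rhsV u v k l m.
  change ((k + n)%:~R * fracV u v (vtx_of (k + n) (l + n) (m + n)) 0 3
        + (l + n)%:~R * fracV u v (vtx_of (k + n) (l + n) (m + n)) 2 5
        + (m + n)%:~R * fracV u v (vtx_of (k + n) (l + n) (m + n)) 4 1 = rhsV u v k l m).
  rewrite hz !intrD.
  transitivity (k%:~R * fracV u v z 0 3 + l%:~R * fracV u v z 2 5 + m%:~R * fracV u v z 4 1
     + n%:~R * (fracV u v z 0 3 + fracV u v z 2 5 + fracV u v z 4 1)); first by ring.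
  by rewrite SV mulr0 addr0.
by rewrite EU EV.
Qed.
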